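(* Let $c_p>0$, let $\mathcal{T}=\{\tau_1,\dots,\tau_m\}$ be a finite set of keep-alive window lengths in $[0,\infty]$, let $n\ge 0$ and let $x_1,\dots,x_n>0$ be any inter-arrival times with history $\mathcal{H}_n=(x_1,\dots,x_n)$. For a report $\hat\theta\ge 0$, let $\tau_{\hat\theta,\mathcal{H}_n}$ be the random window length chosen by the exponentially weighted average custom policy (defined in the context). Then for every threshold $x>0$, the function $$\hat\theta\;\mapsto\;\Pr\big(\tau_{\hat\theta,\mathcal{H}_n}<x\big)=\sum_{\tau_j\in\mathcal{T},\ \tau_j<x}\frac{e^{-L_n(\tau_j,\mathcal{H}_n,\hat\theta)}}{\sum_{\tau_k\in\mathcal{T}}e^{-L_n(\tau_k,\mathcal{H}_n,\hat\theta)}}$$ is monotonically non-increasing on $[0,\infty)$, i.e. $\frac{\partial}{\partial\hat\theta}\Pr(\tau_{\hat\theta,\mathcal{H}_n}<x)\le 0$. In particular, the probability that the policy produces a cold start on an arrival with inter-arrival time $x$ (namely $\Pr(\tau_{\hat\theta,\mathcal{H}_n}<x)$) is non-increasing in the reported cold-start cost $\hat\theta$.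
   Context: Keep-alive (TTL) caching model. A cost $c_p>0$ per unit time is incurred for keeping an application in cache. For a window length $\tau\in[0,\infty]$ and an inter-arrival time $x>0$: the cold-start indicator is $cs(\tau,x)=0$ if $x\le\tau$ and $cs(\tau,x)=1$ if $x>\tau$; the wasted-memory cost is $wm(\tau,x)=c_p x$ if $x\le \tau$ and $wm(\tau,x)=c_p\tau$ if $x>\tau$ (so $wm(\infty,x)=c_px$, $cs(\infty,x)=0$). For a history of inter-arrival times $\mathcal{H}_n=(x_1,\dots,x_n)$, a fixed window $\tau$ and a parameter $\theta\ge0$, the cumulative loss is $L_n(\tau,\mathcal{H}_n,\theta)=\sum_{j=1}^n wm(\tau,x_j)+\theta\sum_{j=1}^n cs(\tau,x_j)$. The exponentially weighted average custom policy with finite expert set $\mathcal{T}$, given report $\hat\theta$ and history $\mathcal{H}_n$, chooses $\tau_j\in\mathcal{T}$ with probability $\Pr(\tau_{\hat\theta,\mathcal{H}_n}=\tau_j)=e^{-L_n(\tau_j,\mathcal{H}_n,\hat\theta)}/\sum_{\tau_k\in\mathcal{T}}e^{-L_n(\tau_k,\mathcal{H}_n,\hat\theta)}$. *)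

(* Defs.v *)
From Stdlib Require Import Reals List.
From Coquelicot Require Import Coquelicot.
Open Scope R_scope.

Definition sumR (l : list R) : R := fold_right Rplus 0 l.

(* cold-start indicator cs(tau, x): 0 if x <= tau, 1 if x > tau;
   cs(+oo, x) = 0.  (tau = -oo never occurs: windows lie in [0, +oo].) *)
Definition cs (tau : Rbar) (x : R) : R :=
  match tau with
  | Finite t => if Rle_dec x t then 0 else 1
  | p_infty => 0
  | m_infty => 1
  end.

Definition wm (cp : R) (tau : Rbar) (x : R) : R :=
  match tau with
  | Finite t => if Rle_dec x t then cp * x else cp * t
  | p_infty => cp * x
  | m_infty => 0
  end.

Definition loss (cp : R) (tau : Rbar) (H : list R) (theta : R) : R :=
  sumR (map (fun x => wm cp tau x) H) + theta * sumR (map (fun x => cs tau x) H).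

(* probability that the exponentially weighted average custom policy with
   expert set T (a duplicate-free list) chooses tau_j *)
Definition ewa_prob (cp : R) (T : list Rbar) (H : list R) (theta : R) (tauj : Rbar) : R :=
  exp (- loss cp tauj H theta) /
  sumR (map (fun tauk => exp (- loss cp tauk H theta)) T).

Definition prob_lt (cp : R) (T : list Rbar) (H : list R) (theta x : R) : R :=
  sumR (map (fun tauj => if Rbar_lt_dec tauj (Finite x) then ewa_prob cp T H theta tauj else 0) T).

(* Main.v *)
Require Import Defs.
From Stdlib Require Import Reals List Lra.
From Coquelicot Require Import Coquelicot.
Open Scope R_scope.

Lemma cs_anti (t1 t2 : Rbar) (xi : R) : Rbar_le t1 t2 -> cs t2 xi <= cs t1 xi.
Proof.
  destruct t1 as [a| |], t2 as [b| |]; simpl; intros Hle; try contradiction;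
  repeat destruct Rle_dec; lra.
Qed.

Lemma sumR_le {A} (f g : A -> R) (l : list A) :
  (forall a, In a l -> f a <= g a) -> sumR (map f l) <= sumR (map g l).
Proof.
  induction l as [|a l IH]; simpl; intros Hf; [lra|].
  specialize (IH (fun b Hb => Hf b (or_intror Hb))). specialize (Hf a (or_introl eq_refl)). lra.
Qed.

Lemma sumR_ge0 {A} (f : A -> R) (l : list A) :
  (forall a, In a l -> 0 <= f a) -> 0 <= sumR (map f l).
Proof.
  induction l as [|a l IH]; simpl; intros Hf; [lra|].
  specialize (IH (fun b Hb => Hf b (or_intror Hb))). specialize (Hf a (or_introl eq_refl)). lra.
Qed.

Lemma sumR_scale {A} (c : R) (f : A -> R) (l : list A) :
  sumR (map (fun a => c * f a) l) = c * sumR (map f l).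
Proof. induction l as [|a l IH]; simpl; [ring| rewrite IH; ring]. Qed.

Lemma sumR_add {A} (f g : A -> R) (l : list A) :
  sumR (map (fun a => f a + g a) l) = sumR (map f l) + sumR (map g l).
Proof. induction l as [|a l IH]; simpl; [ring| rewrite IH; ring]. Qed.

Lemma sumR_ext {A} (f g : A -> R) (l : list A) :
  (forall a, f a = g a) -> sumR (map f l) = sumR (map g l).
Proof. intros; induction l; simpl; [auto| rewrite H, IHl; auto]. Qed.

Lemma sumR_pos {A} (f : A -> R) (l : list A) :
  l <> nil -> (forall a, 0 < f a) -> 0 < sumR (map f l).
Proof.
  destruct l as [|a l]; [congruence|]. intros _ Hf; simpl.
  pose proof (sumR_ge0 f l (fun b _ => Rlt_le _ _ (Hf b))). specialize (Hf a). lra.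
Qed.

Lemma csum_le (t : Rbar) (x : R) (H : list R) :
  Rbar_le (Finite x) t -> sumR (map (cs t) H) <= sumR (map (cs (Finite x)) H).
Proof. intros; apply sumR_le; intros; apply cs_anti; auto. Qed.

Lemma csum_ge (t : Rbar) (x : R) (H : list R) :
  Rbar_lt t (Finite x) -> sumR (map (cs (Finite x)) H) <= sumR (map (cs t) H).
Proof. intros; apply sumR_le; intros; apply cs_anti. apply Rbar_lt_le; auto. Qed.

Theorem lemma5p1 (cp : R) (T : list Rbar) (H : list R) (x : R) :
  0 < cp ->
  T <> nil ->
  NoDup T ->
  List.Forall (fun tau => Rbar_le (Finite 0) tau) T ->
  List.Forall (fun xi => 0 < xi) H ->
  0 < x ->
  forall theta1 theta2 : R, 0 <= theta1 -> theta1 <= theta2 ->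
    prob_lt cp T H theta2 x <= prob_lt cp T H theta1 x.
Proof.
  intros _ HT _ _ _ _ th1 th2 _ Hth.
  set (w := fun th tau => exp (- loss cp tau H th)).
  set (c := fun tau => sumR (map (cs tau) H)).
  set (K := c (Finite x)).
  set (d := th2 - th1).
  set (E := exp (- (d * K))).
  set (Ab := fun th => sumR (map (fun tau => if Rbar_lt_dec tau (Finite x) then w th tau else 0) T)).
  set (Bb := fun th => sumR (map (fun tau => if Rbar_lt_dec tau (Finite x) then 0 else w th tau) T)).
  assert (Hw2 : forall tau, w th2 tau = w th1 tau * exp (- (d * c tau))).
  { intros tau; unfold w, loss, c, d. rewrite <- exp_plus. f_equal. change (fun x0 : R => cs tau x0) with (cs tau). ring. }
  assert (HS : forall th, sumR (map (w th) T) = Ab th + Bb th).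
  { intros th; unfold Ab, Bb; rewrite <- sumR_add; apply sumR_ext; intros a.
    destruct Rbar_lt_dec; ring. }
  assert (HP : forall th, prob_lt cp T H th x = Ab th / sumR (map (w th) T)).
  { intros th; unfold prob_lt, ewa_prob, Ab, Rdiv.
    rewrite Rmult_comm, <- sumR_scale. apply sumR_ext; intros a.
    destruct Rbar_lt_dec; unfold w; simpl; unfold Rdiv; try ring. }
  assert (Hwp : forall th tau, 0 < w th tau) by (intros; apply exp_pos).
  assert (Hexp : forall a b, a <= b -> exp a <= exp b).
  { intros a b Hab; destruct (Rle_lt_or_eq_dec _ _ Hab) as [h|h];
      [apply Rlt_le, exp_increasing; auto | subst; lra]. }
  assert (Hd : 0 <= d) by (unfold d; lra).
  assert (HA2 : Ab th2 <= E * Ab th1).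
  { unfold Ab; rewrite <- sumR_scale; apply sumR_le; intros a _.
    destruct Rbar_lt_dec as [Hl|Hl]; [|lra].
    rewrite Hw2. unfold E. pose proof (csum_ge a x H Hl) as Hc. fold (c a) K in Hc.
    assert (exp (- (d * c a)) <= exp (- (d * K))).
    { apply Hexp. pose proof (Rmult_le_compat_l d _ _ Hd Hc). unfold K, c in *. lra. }
    rewrite (Rmult_comm (exp _)). apply Rmult_le_compat_l; [apply Rlt_le, Hwp|auto]. }
  assert (HB2 : E * Bb th1 <= Bb th2).
  { unfold Bb; rewrite <- sumR_scale; apply sumR_le; intros a _.
    destruct Rbar_lt_dec as [Hl|Hl]; [lra|].
    rewrite Hw2. unfold E.
    assert (Hle : Rbar_le (Finite x) a).
    { destruct a as [t| |]; simpl in *; auto; lra. }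
    pose proof (csum_le a x H Hle) as Hc. fold (c a) K in Hc.
    assert (exp (- (d * K)) <= exp (- (d * c a))).
    { apply Hexp. pose proof (Rmult_le_compat_l d _ _ Hd Hc). unfold K, c in *. lra. }
    rewrite (Rmult_comm (exp (- (d * K)))). apply Rmult_le_compat_l; [apply Rlt_le, Hwp|auto]. }
  assert (HA0 : forall th, 0 <= Ab th).
  { intros th; apply sumR_ge0; intros a _; destruct Rbar_lt_dec; [apply Rlt_le, Hwp|lra]. }
  assert (HB0 : forall th, 0 <= Bb th).
  { intros th; apply sumR_ge0; intros a _; destruct Rbar_lt_dec; [lra|apply Rlt_le, Hwp]. }
  assert (HSp : forall th, 0 < Ab th + Bb th).
  { intros th; rewrite <- HS; apply sumR_pos; auto. }
  rewrite !HP, !HS.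
  pose proof (HSp th1); pose proof (HSp th2).
  apply (Rmult_le_reg_r ((Ab th1 + Bb th1) * (Ab th2 + Bb th2))); [nra|].
  replace (Ab th2 / (Ab th2 + Bb th2) * ((Ab th1 + Bb th1) * (Ab th2 + Bb th2)))
    with (Ab th2 * (Ab th1 + Bb th1)) by (field; lra).
  replace (Ab th1 / (Ab th1 + Bb th1) * ((Ab th1 + Bb th1) * (Ab th2 + Bb th2)))
    with (Ab th1 * (Ab th2 + Bb th2)) by (field; lra).
  assert (Ab th2 * Bb th1 <= Ab th1 * Bb th2).
  { pose proof (HA0 th1); pose proof (HB0 th1).
    apply Rle_trans with (E * Ab th1 * Bb th1).
    - apply Rmult_le_compat_r; auto.
    - replace (E * Ab th1 * Bb th1) with (Ab th1 * (E * Bb th1)) by ring.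
      apply Rmult_le_compat_l; auto. }
  nra.
Qed.
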